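(* Let $S$ be a set and $\emptyset\neq\mathcal{E}\subseteq\mathcal{P}(S)$. For every $A \subseteq S$, the set $\{N_{A}\neq 0\}=\{M\in C(S)\mid M\cap A\neq\emptyset\}$ belongs to $\mathfrak{H}(\mathcal{E})$ if and only if $A$ is the union of a countable (possibly empty) family of sets in $\mathcal{E}$.
   Context: $C(S)$ is the set of countable subsets of $S$; $N_A(M)=|A\cap M|$ for $A\subseteq S$, $M\in C(S)$; $\mathfrak{H}(\mathcal{E})=\sigma(\{N_E\neq0\}\mid E\in\mathcal{E})$ is a $\sigma$-field on $C(S)$. *)

(* Defs.v *)
Set Implicit Arguments.

Definition countable_set (S : Type) (M : S -> Prop) : Prop :=
  exists f : S -> nat, forall x y, M x -> M y -> f x = f y -> x = y.

Definition CS (S : Type) : Type := { M : S -> Prop | countable_set M }.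

Definition NA_ne0 (S : Type) (A : S -> Prop) : CS S -> Prop :=
  fun M => exists x, A x /\ proj1_sig M x.

(* sigma-field on a type X, with sets as predicates; closed under
   extensional equality of sets *)
Definition is_sigma_field (X : Type) (F : (X -> Prop) -> Prop) : Prop :=
  (forall A B : X -> Prop, F A -> (forall x, A x <-> B x) -> F B) /\
  F (fun _ => True) /\
  (forall A, F A -> F (fun x => ~ A x)) /\
  (forall A : nat -> X -> Prop, (forall n, F (A n)) -> F (fun x => exists n, A n x)).

Definition sigma_gen (X : Type) (G : (X -> Prop) -> Prop) : (X -> Prop) -> Prop :=
  fun B => forall F, is_sigma_field F -> (forall A, G A -> F A) -> F B.

Definition H_sigma (S : Type) (E : (S -> Prop) -> Prop) : (CS S -> Prop) -> Prop :=
  sigma_gen (fun B => exists e, E e /\ B = NA_ne0 e).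

Definition countable_union_of (S : Type) (E : (S -> Prop) -> Prop) (A : S -> Prop) : Prop :=
  exists (I : nat -> Prop) (f : nat -> S -> Prop),
    (forall n, I n -> E (f n)) /\ (forall x, A x <-> exists n, I n /\ f n x).

(* Main.v *)
Require Import Defs.
From Stdlib Require Import Classical ClassicalEpsilon Cantor.

Definition agree {S : Type} (e : nat -> S -> Prop) (M1 M2 : CS S) : Prop :=
  forall n, NA_ne0 (e n) M1 <-> NA_ne0 (e n) M2.

Definition good {S : Type} (E : (S -> Prop) -> Prop) (B : CS S -> Prop) : Prop :=
  exists e : nat -> S -> Prop, (forall n, E (e n)) /\
    forall M1 M2 : CS S, agree e M1 M2 -> (B M1 <-> B M2).

Lemma good_sigma {S : Type} (E : (S -> Prop) -> Prop) (HE : exists e, E e) :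
  is_sigma_field (good E).
Proof.
  destruct HE as [e0 He0].
  split; [|split; [|split]].
  - intros A B [e [He H]] HAB. exists e; split; auto.
    intros M1 M2 Ha. specialize (H M1 M2 Ha).
    rewrite <- !HAB; exact H.
  - exists (fun _ => e0); split; auto. tauto.
  - intros A [e [He H]]. exists e; split; auto.
    intros M1 M2 Ha. specialize (H M1 M2 Ha). tauto.
  - intros A HA.
    assert (Hc : forall k, {e : nat -> S -> Prop | (forall n, E (e n)) /\
        forall M1 M2 : CS S, agree e M1 M2 -> (A k M1 <-> A k M2)}).
    { intro k. apply constructive_indefinite_description. apply HA. }
    exists (fun n => proj1_sig (Hc (fst (of_nat n))) (snd (of_nat n))).
    split.
    + intro n. apply (proj1 (proj2_sig (Hc (fst (of_nat n))))) .
    + intros M1 M2 Ha.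
      assert (Hk : forall k, A k M1 <-> A k M2).
      { intro k. apply (proj2 (proj2_sig (Hc k))).
        intro m. specialize (Ha (to_nat (k, m))).
        cbv beta in Ha; rewrite cancel_of_to in Ha. simpl in Ha. exact Ha. }
      split; intros [n Hn]; exists n; apply Hk; auto.
Qed.

Lemma count_range {S : Type} (P : nat -> Prop) (y : nat -> S) :
  countable_set (fun z => exists n, P n /\ z = y n).
Proof.
  exists (fun z => epsilon (inhabits 0) (fun n => z = y n)).
  intros a b [n [_ Ha]] [m [_ Hb]] Heq.
  assert (H1 : a = y (epsilon (inhabits 0) (fun n => a = y n))).
  { apply (epsilon_spec (inhabits 0) (fun n => a = y n)). exists n; auto. }
  assert (H2 : b = y (epsilon (inhabits 0) (fun n => b = y n))).
  { apply (epsilon_spec (inhabits 0) (fun n => b = y n)). exists m; auto. }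
  rewrite H1, H2, Heq. reflexivity.
Qed.

Theorem theorem3p3 (S : Type) (E : (S -> Prop) -> Prop) (HE : exists e, E e)
  (A : S -> Prop) :
  H_sigma E (NA_ne0 A) <-> countable_union_of E A.
Proof.
  split.
  - intro H. destruct (H (good E) (good_sigma E HE)) as [e [He Hg]].
    { intros B [e [He ->]]. exists (fun _ => e). split; auto.
      intros M1 M2 Ha. apply (Ha 0). }
    exists (fun n => forall x, e n x -> A x), e. split.
    { intros n _; apply He. }
    intro x. split.
    2:{ intros [n [Hn Hx]]. auto. }
    intro Ax. apply NNPP. intro Hno.
    assert (Hy : forall n, exists y, e n x -> e n y /\ ~ A y).
    { intro n. destruct (classic (e n x)) as [Hx|Hx].
      - destruct (classic (exists y, e n y /\ ~ A y)) as [[y Hy]|Hny].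
        + exists y; auto.
        + exfalso. apply Hno. exists n. split; auto.
          intros z Hz. apply NNPP. intro. apply Hny. exists z; auto.
      - exists x. tauto. }
    apply choice in Hy. destruct Hy as [y Hy].
    set (y' := fun n => match n with 0 => x | Datatypes.S k => y k end).
    set (P' := fun n => match n with 0 => True | Datatypes.S k => e k x end).
    pose (M1 := exist _ (fun z => exists n, P' n /\ z = y' n) (count_range P' y') : CS S).
    pose (M2 := exist _ (fun z => exists n, e n x /\ z = y n) (count_range (fun n => e n x) y) : CS S).
    assert (Hag : agree e M1 M2).
    { intro n. unfold NA_ne0; simpl. split.
      - intros [z [Hz [[|k] [Hk ->]]]]; simpl in *.
        + exists (y n). split. apply (Hy n Hz). exists n; auto.
        + exists (y k). split; auto. exists k; auto.
      - intros [z [Hz [k [Hk ->]]]]. exists (y k). split; auto.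
        exists (Datatypes.S k); simpl; auto. }
    destruct (proj1 (Hg M1 M2 Hag)) as [z [Az [k [Hk ->]]]].
    + exists x. split; auto. exists 0; simpl; auto.
    + apply (proj2 (Hy k Hk)); auto.
  - intros [I [f [Hf HA]]] F HF Hgen.
    destruct HF as [Hext [HT [HC HU]]].
    assert (H0 : F (fun _ => False)).
    { apply (Hext (fun x => ~ True)). apply HC, HT. intros; tauto. }
    apply (Hext (fun M => exists n, I n /\ NA_ne0 (f n) M)).
    + apply HU. intro n. destruct (classic (I n)) as [Hn|Hn].
      * apply (Hext (NA_ne0 (f n))). apply Hgen. exists (f n); auto.
        intro; tauto.
      * apply (Hext _ _ H0). intro; tauto.
    + intro M. unfold NA_ne0. split.
      * intros [n [Hn [x [Hx HM]]]]. exists x. split; auto. apply HA. eauto.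
      * intros [x [Ax HM]]. apply HA in Ax. destruct Ax as [n [Hn Hx]].
        exists n. split; auto. exists x; auto.
Qed.
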